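(* There is no kernel on $\mathbf{R}$ that is shiftable. That is, there is no function $\varphi:\mathbf{R}\to\mathbf{R}$ which is simultaneously (i) a kernel on the entire real line and (ii) shiftable on $\mathbf{R}$.
   Context: A function $\varphi:\mathbf{R}\to\mathbf{R}$ is called shiftable if there exist finitely many fixed functions $\varphi_1,\ldots,\varphi_N:\mathbf{R}\to\mathbf{R}$ such that for every $\tau\in\mathbf{R}$ there are coefficients $c_1(\tau),\ldots,c_N(\tau)\in\mathbf{R}$ with $\varphi(x-\tau)=c_1(\tau)\varphi_1(x)+\cdots+c_N(\tau)\varphi_N(x)$ for all $x\in\mathbf{R}$. A kernel is a smooth function $\varphi:\mathbf{R}\to\mathbf{R}$ that is symmetric ($\varphi(-x)=\varphi(x)$ for all $x$), non-negative ($\varphi(x)\ge 0$ for all $x$), and unimodal with peak at the origin, meaning $\varphi$ is strictly increasing on $(-\infty,0]$ and strictly decreasing on $[0,\infty)$. *)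

(* Defs.v *)
From Stdlib Require Import Reals.
From Coquelicot Require Import Coquelicot.
Open Scope R_scope.

(* phi is C^infinity: every iterated derivative exists everywhere.
   Coquelicot's [ex_derive_n f (S n) x] says Derive_n f n is differentiable
   at x ([ex_derive_n f 0 x] is True). *)
Definition smooth (phi : R -> R) : Prop :=
  forall (n : nat) (x : R), ex_derive_n phi n x.

Definition is_kernel (phi : R -> R) : Prop :=
  smooth phi /\
  (forall x, phi (- x) = phi x) /\
  (forall x, 0 <= phi x) /\
  (forall x y, x < y -> y <= 0 -> phi x < phi y) /\
  (forall x y, 0 <= x -> x < y -> phi y < phi x).

Fixpoint fsum (N : nat) (f : nat -> R) : R :=
  match N with
  | O => 0
  | S n => fsum n f + f n
  end.

(* Shiftable: finitely many fixed functions phi_1..phi_N (here indexed by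
   i = 0..N-1) such that every translate phi(. - tau) is a linear combination
   c_1(tau) phi_1 + ... + c_N(tau) phi_N. *)
Definition shiftable (phi : R -> R) : Prop :=
  exists (N : nat) (basis : nat -> R -> R),
    forall tau : R, exists c : nat -> R,
      forall x : R, phi (x - tau) = fsum N (fun i => c i * basis i x).

(* Main.v *)
Require Import Defs.
From Stdlib Require Import Reals.
From Coquelicot Require Import Coquelicot.
From Stdlib Require Import Lra Lia Classical ClassicalEpsilon Arith.
Open Scope R_scope.

Lemma fsum_ext M f g : (forall k, (k < M)%nat -> f k = g k) -> fsum M f = fsum M g.
Proof.
  induction M; simpl; intros H; auto.
  rewrite IHM; [rewrite H; auto; lia | intros; apply H; lia].
Qed.

Lemma fsum_lin M f g r : fsum M (fun k => f k + r * g k) = fsum M f + r * fsum M g.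
Proof. induction M; simpl; [ring | rewrite IHM; ring]. Qed.

Lemma fsum_zero M f : (forall k, (k < M)%nat -> f k = 0) -> fsum M f = 0.
Proof.
  induction M; simpl; intros H; auto.
  rewrite IHM; [rewrite H; [ring|lia] | intros; apply H; lia].
Qed.

Lemma fsum_swap M N a c b :
  fsum M (fun k => a k * fsum N (fun i => c k i * b i)) =
  fsum N (fun i => fsum M (fun k => a k * c k i) * b i).
Proof.
  induction M; simpl.
  - symmetry; apply fsum_zero; intros; ring.
  - rewrite IHM.
    rewrite (fsum_ext N (fun i => (fsum M (fun k => a k * c k i) + a M * c M i) * b i)
      (fun i => fsum M (fun k => a k * c k i) * b i + a M * (c M i * b i))).
    2: intros; ring.
    rewrite fsum_lin; ring.
Qed.

Definition sh (p k : nat) : nat := if Nat.ltb k p then k else S k.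

Lemma fsum_split m p g : (p < S m)%nat ->
  fsum (S m) g = fsum m (fun k => g (sh p k)) + g p.
Proof.
  revert p; induction m; intros p Hp.
  - assert (p = 0%nat) by lia; subst; simpl; ring.
  - destruct (Nat.eq_dec p (S m)).
    + subst. change (fsum (S (S m)) g) with (fsum (S m) g + g (S m)).
      f_equal. apply fsum_ext. intros k Hk. unfold sh.
      destruct (Nat.ltb_spec k (S m)); [auto | lia].
    + change (fsum (S (S m)) g) with (fsum (S m) g + g (S m)).
      rewrite (IHm p) by lia.
      change (fsum (S m) (fun k => g (sh p k))) with
        (fsum m (fun k => g (sh p k)) + g (sh p m)).
      unfold sh at 3. destruct (Nat.ltb_spec m p); [lia|]. ring.
Qed.

Lemma fsum_abs M f B : (forall k, (k < M)%nat -> Rabs (f k) <= B) ->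
  Rabs (fsum M f) <= INR M * B.
Proof.
  induction M; intros H.
  - simpl; rewrite Rabs_R0; lra.
  - rewrite S_INR. change (fsum (S M) f) with (fsum M f + f M).
    eapply Rle_trans; [apply Rabs_triang|].
    assert (H1 := IHM (fun k Hk => H k ltac:(lia))).
    assert (H2 := H M ltac:(lia)). lra.
Qed.

Lemma fsum_delta M j f v : (j < M)%nat ->
  fsum M (fun k => f k * (if Nat.eqb k j then v else 0)) = f j * v.
Proof.
  induction M; intros Hj; [lia|]. simpl.
  destruct (Nat.eq_dec j M).
  - subst. rewrite Nat.eqb_refl. rewrite fsum_zero; [ring|].
    intros k Hk. destruct (Nat.eqb_spec k M); [lia|ring].
  - rewrite IHM by lia. destruct (Nat.eqb_spec M j); [lia|ring].
Qed.

Lemma argmax M (a : nat -> R) : (0 < M)%nat ->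
  exists j, (j < M)%nat /\ forall k, (k < M)%nat -> Rabs (a k) <= Rabs (a j).
Proof.
  induction M; intros H; [lia|].
  destruct M.
  - exists 0%nat; split; [lia|]. intros k Hk; assert (k = 0%nat) by lia; subst; lra.
  - destruct IHM as [j [Hj Hk]]; [lia|].
    destruct (Rle_dec (Rabs (a (S M))) (Rabs (a j))).
    + exists j; split; [lia|]. intros k Hk'.
      destruct (Nat.eq_dec k (S M)); [subst; auto|apply Hk; lia].
    + exists (S M); split; [lia|]. intros k Hk'.
      destruct (Nat.eq_dec k (S M)); [subst; lra|].
      assert (Hk1 := Hk k ltac:(lia)); lra.
Qed.

Lemma dep : forall N M (c : nat -> nat -> R), (N < M)%nat ->
  exists a : nat -> R, (exists k, (k < M)%nat /\ a k <> 0) /\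
    forall i, (i < N)%nat -> fsum M (fun k => a k * c k i) = 0.
Proof.
  induction N; intros M c HNM.
  - exists (fun _ => 1). split; [exists 0%nat; split; [lia|lra] | intros; lia].
  - destruct (classic (forall k, (k < M)%nat -> c k N = 0)) as [Hz|Hnz].
    + destruct (IHN M c ltac:(lia)) as [a [Hnz Hs]].
      exists a; split; auto. intros i Hi.
      destruct (Nat.eq_dec i N).
      * subst. apply fsum_zero. intros k Hk; rewrite Hz; auto; ring.
      * apply Hs; lia.
    + apply not_all_ex_not in Hnz. destruct Hnz as [p Hp].
      apply imply_to_and in Hp. destruct Hp as [Hp Hcp].
      destruct M as [|m]; [lia|].
      set (r := c p N).
      set (d := fun k i => c (sh p k) i - c (sh p k) N / r * c p i).
      destruct (IHN m d ltac:(lia)) as [a' [[k0 [Hk0 Ha0]] Hs]].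
      set (S0 := fsum m (fun k => a' k * c (sh p k) N)).
      set (a := fun k => if Nat.eqb k p then - S0 / r
                         else if Nat.ltb k p then a' k else a' (k - 1)%nat).
      assert (Hash : forall k, a (sh p k) = a' k).
      { intros k. unfold a, sh. destruct (Nat.ltb_spec k p).
        - destruct (Nat.eqb_spec k p); [lia|]. destruct (Nat.ltb_spec k p); [auto|lia].
        - destruct (Nat.eqb_spec (S k) p); [lia|]. destruct (Nat.ltb_spec (S k) p); [lia|].
          f_equal; lia. }
      exists a. split.
      * exists (sh p k0). split.
        -- unfold sh; destruct (Nat.ltb_spec k0 p); lia.
        -- rewrite Hash; auto.
      * intros i Hi. rewrite (fsum_split m p) by lia.
        rewrite (fsum_ext m _ (fun k => a' k * c (sh p k) i)).
        2: intros; rewrite Hash; auto.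
        assert (Hap : a p = - S0 / r) by (unfold a; rewrite Nat.eqb_refl; auto).
        rewrite Hap.
        destruct (Nat.eq_dec i N).
        -- subst i. fold S0. fold r. field. auto.
        -- assert (HH := Hs i ltac:(lia)).
           rewrite (fsum_ext m _ (fun k => a' k * c (sh p k) i +
                 (- (c p i / r)) * (a' k * c (sh p k) N))) in HH.
           2: intros; unfold d; field; auto.
           rewrite fsum_lin in HH. fold S0 in HH.
           replace (- S0 / r * c p i) with (- (c p i / r) * S0) by (field; auto).
           exact HH.
Qed.

Lemma drop_small (phi : R -> R) :
  (forall x, 0 <= phi x) ->
  (forall x y, 0 <= x -> x < y -> phi y < phi x) ->
  forall eps, 0 < eps -> exists T0, 0 <= T0 /\
    forall t, T0 <= t -> phi t - phi (t + 1) < eps.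
Proof.
  intros Hpos Hdec eps He.
  apply NNPP. intros Hno.
  assert (Hall : forall T0, 0 <= T0 -> exists t, T0 <= t /\ eps <= phi t - phi (t + 1)).
  { intros T0 HT0. apply NNPP. intros Hn. apply Hno. exists T0. split; auto.
    intros t Ht. apply Rnot_le_lt. intros Hl. apply Hn. exists t; auto. }
  assert (Hind : forall n : nat, exists t, 0 <= t /\ phi t <= phi 0 - INR n * eps).
  { induction n.
    - exists 0. simpl; lra.
    - destruct IHn as [t [Ht Hpt]].
      destruct (Hall t Ht) as [t' [Ht' Hd]].
      exists (t' + 1). split; [lra|]. rewrite S_INR.
      assert (phi t' <= phi t).
      { destruct (Req_dec t t'); [subst; lra|]. left; apply Hdec; lra. }
      nra. }
  destruct (INR_unbounded (phi 0 / eps)) as [n Hn].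
  destruct (Hind n) as [t [Ht Hpt]].
  assert (INR n * eps > phi 0).
  { apply Rmult_lt_compat_r with (r := eps) in Hn; auto.
    unfold Rdiv in Hn. rewrite Rmult_assoc, Rinv_l in Hn; lra. }
  specialize (Hpos t). lra.
Qed.

Theorem mainTheorem1 : ~ (exists phi : R -> R, is_kernel phi /\ shiftable phi).
Proof.
  intros [phi [[_ [Hsym [Hpos [Hinc Hdec]]]] [N [b Hsh]]]].
  set (C := fun tau => proj1_sig (constructive_indefinite_description _ (Hsh tau))).
  assert (HC : forall tau x, phi (x - tau) = fsum N (fun i => C tau i * b i x)).
  { intros tau x. unfold C.
    destruct (constructive_indefinite_description _ (Hsh tau)) as [cc Hcc]; simpl; auto. }
  set (delta := phi 0 - phi 1).
  assert (Hdelta : 0 < delta) by (unfold delta; assert (phi 1 < phi 0) by (apply Hdec; lra); lra).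
  set (M := S N).
  assert (HM : 0 < INR M) by (apply lt_0_INR; unfold M; lia).
  set (eps := delta / (2 * INR M)).
  assert (Heps : 0 < eps) by (unfold eps; apply Rdiv_lt_0_compat; lra).
  destruct (drop_small phi Hpos Hdec eps Heps) as [T0 [HT0 Hdrop]].
  set (T := T0 + 1).
  set (cc := fun k i => C (INR k * T) i - C (INR k * T - 1) i).
  destruct (dep N M cc ltac:(unfold M; lia)) as [a [[k0 [Hk0 Ha0]] Hs]].
  set (g := fun k x => phi (x - INR k * T) - phi (x - (INR k * T - 1))).
  assert (Hzero : forall x, fsum M (fun k => a k * g k x) = 0).
  { intros x.
    rewrite (fsum_ext M _ (fun k => a k * fsum N (fun i => cc k i * b i x))).
    2:{ intros k Hk. unfold g. rewrite !HC. f_equal.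
        rewrite <- (Rplus_0_r (fsum N (fun i => C (INR k * T) i * b i x))).
        replace (fsum N (fun i => C (INR k * T) i * b i x) + 0 -
                 fsum N (fun i => C (INR k * T - 1) i * b i x)) with
          (fsum N (fun i => C (INR k * T) i * b i x) + (-1) *
                 fsum N (fun i => C (INR k * T - 1) i * b i x)) by ring.
        rewrite <- fsum_lin. apply fsum_ext. intros; unfold cc; ring. }
    rewrite fsum_swap. apply fsum_zero. intros i Hi. rewrite Hs; auto; ring. }
  destruct (argmax M a ltac:(unfold M; lia)) as [j [Hj Hmax]].
  set (x := INR j * T).
  set (e := fun k => g k x - (if Nat.eqb k j then delta else 0)).
  assert (He : forall k, (k < M)%nat -> Rabs (e k) <= eps).
  { intros k Hk. unfold e, g, x.
    destruct (Nat.eqb_spec k j).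
    - subst k. replace (INR j * T - INR j * T) with 0 by ring.
      replace (INR j * T - (INR j * T - 1)) with 1 by ring.
      unfold delta. replace (phi 0 - phi 1 - (phi 0 - phi 1)) with 0 by ring.
      rewrite Rabs_R0; lra.
    - set (u := INR j * T - INR k * T).
      replace (INR j * T - (INR k * T - 1)) with (u + 1) by (unfold u; ring).
      replace (phi u - phi (u + 1) - 0) with (phi u - phi (u + 1)) by ring.
      destruct (Nat.lt_ge_cases k j) as [Hkj|Hkj].
      + assert (INR k + 1 <= INR j) by (rewrite <- S_INR; apply le_INR; lia).
        assert (Hu : T <= u) by (unfold u, T in *; nra).
        assert (phi (u + 1) < phi u) by (apply Hdec; unfold T in *; lra).
        assert (phi u - phi (u + 1) < eps) by (apply Hdrop; unfold T in *; lra).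
        rewrite Rabs_pos_eq; lra.
      + assert (INR j + 1 <= INR k) by (rewrite <- S_INR; apply le_INR; lia).
        assert (Hu : u <= - T) by (unfold u, T in *; nra).
        set (s := - u - 1).
        assert (E1 : phi u = phi (s + 1)) by (rewrite <- (Hsym u); f_equal; unfold s; ring).
        assert (E2 : phi (u + 1) = phi s) by (rewrite <- (Hsym (u + 1)); f_equal; unfold s; ring).
        rewrite E1, E2.
        assert (phi (s + 1) < phi s) by (apply Hdec; unfold s, T in *; lra).
        assert (phi s - phi (s + 1) < eps) by (apply Hdrop; unfold s, T in *; lra).
        rewrite Rabs_left; lra. }
  assert (Hsum : fsum M (fun k => a k * g k x) =
                 fsum M (fun k => a k * e k) + 1 * (a j * delta)).
  { rewrite <- (fsum_delta M j a delta Hj).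
    rewrite <- fsum_lin. apply fsum_ext. intros; unfold e; ring. }
  rewrite Hzero in Hsum.
  assert (Hb : Rabs (fsum M (fun k => a k * e k)) <= INR M * (Rabs (a j) * eps)).
  { apply fsum_abs. intros k Hk. rewrite Rabs_mult.
    apply Rmult_le_compat; try apply Rabs_pos; auto. }
  assert (Hr : Rabs (fsum M (fun k => a k * e k)) = Rabs (a j) * delta).
  { replace (fsum M (fun k => a k * e k)) with (- (a j * delta)) by lra.
    rewrite Rabs_Ropp, Rabs_mult, (Rabs_pos_eq delta); lra. }
  assert (Haj : 0 < Rabs (a j)).
  { assert (Hk := Hmax k0 Hk0). assert (0 < Rabs (a k0)) by (apply Rabs_pos_lt; auto). lra. }
  assert (INR M * (Rabs (a j) * eps) = Rabs (a j) * delta / 2) by (unfold eps; field; lra).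
  assert (0 < Rabs (a j) * delta) by (apply Rmult_lt_0_compat; auto).
  lra.
Qed.
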